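(* Let $b\ge3$, $D\subset\{0,\dots,b-1\}$ with $2\le|D|\le b$, list $\mathcal C=\mathcal C_{b,D}$ increasingly as $k_1<k_2<\cdots$, and let $s=\gcd\{d-d':d,d'\in D\}$. Consider $L(\alpha,\beta)=\lim_{N\to\infty}\frac1N\sum_{n=1}^N e(k_n\alpha+s_b(k_n)\beta)$. (1) If $s=1$, the limit exists for all real $\alpha,\beta$; if it is nonzero then there are integers $a,r,t$ with $\alpha\equiv\frac{a}{b-1}+\frac{r}{b^t}$ and $\beta\equiv-\frac{a}{b-1}\pmod 1$. (2) If $s>1$ and $s\mid d$ for all $d\in D$, the limit exists for all $\alpha,\beta$; if it is nonzero then there are integers $a,r,t$ with $s\alpha\equiv\frac{a}{b-1}+\frac{r}{b^t}$ and $s\beta\equiv-\frac{a}{b-1}\pmod 1$. (3) If $s>1$ and $s\nmid d$ for some $d\in D$, then for every $(\alpha,\beta)$ for which there are no integers $a,r,t$ with $s\alpha\equiv\frac{a}{b-1}+\frac{r}{b^t}$ and $s\beta\equiv-\frac{a}{b-1}\pmod 1$, the limit exists and equals $0$. Finally, if at least one of $\alpha,\beta$ is irrational, then $$\lim_{N-M\to\infty}\frac{1}{N-M}\sum_{M<n\le N}e(k_n\alpha+s_b(k_n)\beta)=0,$$ i.e. for every $\eta>0$ there is $L$ such that the average has modulus $<\eta$ whenever $0\le M<N$ and $N-M\ge L$.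
   Context: $\mathcal C_{b,D}=\{\sum_{j=0}^{k} d_j b^j : k\in\mathbb N_0,\ d_j\in D\}$. $s_b(k)$ is the base-$b$ sum of digits of $k$. $e(x)=e^{2\pi i x}$. The number $s$ is the largest integer such that $D$ is contained in an arithmetic progression of step $s$. *)

(* Defs.v *)
From mathcomp Require Import all_boot all_order all_algebra.
From mathcomp Require Import all_classical all_reals all_analysis.
From mathcomp Require Import complex.
Import Order.TTheory GRing.Theory Num.Theory.
Import numFieldNormedType.Exports.

Set Implicit Arguments.
Unset Strict Implicit.
Unset Printing Implicit Defensive.

Local Open Scope ring_scope.
Local Open Scope complex_scope.

Definition inC (b : nat) (D : {set 'I_b}) (m : nat) : Prop :=
  exists (kk : nat) (d : nat -> 'I_b),
    (forall j, (j <= kk)%N -> d j \in D) /\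
    m = (\sum_(j < kk.+1) (d j : nat) * b ^ j)%N.

(* s_b(m): base-b digit sum of m; digit i of m is (m / b^i) mod b, and for
   b >= 2 all nonzero digits have index i <= m. *)
Definition sdig (b m : nat) : nat := (\sum_(i < m.+1) (m %/ b ^ i %% b))%N.

(* s = gcd { d - d' : d, d' in D } (gcd of the absolute differences) *)
Definition sgcd (b : nat) (D : {set 'I_b}) : nat :=
  (\big[gcdn/0]_(d in D) \big[gcdn/0]_(d' in D) ((d - d') + (d' - d)))%N.

Definition e (R : realType) (x : R) : R[i] :=
  (cos (2 * pi * x) +i* sin (2 * pi * x)).

Definition term (R : realType) (b : nat) (k : nat -> nat) (alpha beta : R)
  (n : nat) : R[i] :=
  e ((k n)%:R * alpha + (sdig b (k n))%:R * beta).

(* the average (1/N) sum_{n=1}^N e(k_n alpha + s_b(k_n) beta),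
   with k_n written k (n-1) (the enumeration k is indexed from 0) *)
Definition avg (R : realType) (b : nat) (k : nat -> nat) (alpha beta : R)
  (N : nat) : (R[i])^o :=
  (N%:R)^-1 * \sum_(i < N) term b k alpha beta i.

Definition congr1 (R : realType) (x y : R) : Prop :=
  exists m : int, x = y + m%:~R.

Definition resonant (R : realType) (b : nat) (x y : R) : Prop :=
  exists a r t : int,
    congr1 x (a%:~R / (b%:R - 1) + r%:~R / (b%:R ^ t)) /\
    congr1 y (- (a%:~R / (b%:R - 1))).

(* Main.v *)
Require Import Defs.
From mathcomp Require Import all_boot all_order all_algebra.
From mathcomp Require Import all_classical all_reals all_analysis.
From mathcomp Require Import complex.
Import Order.TTheory GRing.Theory Num.Theory.
Import numFieldNormedType.Exports.
Local Open Scope ring_scope.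
Local Open Scope complex_scope.
Local Open Scope classical_set_scope.
From mathcomp Require Import zify ring lra.
From Stdlib Require Import Classical.

Set Implicit Arguments.
Unset Strict Implicit.
Section Digits.
Variable b : nat.
Variable D : {set 'I_b}.
Hypothesis hb : (1 < b)%N.

Definition dD (n : nat) : bool := [exists d in D, (d : nat) == n].

Fixpoint inW (u w : nat) : bool :=
  match u with 0 => w == 0%N | u'.+1 => dD (w %% b) && inW u' (w %/ b) end.

Definition Cb (m : nat) : Prop := exists v, (0 < v)%N /\ inW v m.

Lemma b_gt0 : (0 < b)%N. Proof. by apply: ltnW. Qed.

Lemma dm_mod d y : (d < b)%N -> ((d + b * y) %% b = d)%N.
Proof. by move=> hd; rewrite addnC mulnC modnMDl modn_small. Qed.

Lemma dm_div d y : (d < b)%N -> ((d + b * y) %/ b = y)%N.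
Proof. by move=> hd; rewrite addnC mulnC divnMDl ?b_gt0 // divn_small // addn0. Qed.

Lemma dm_eq x : x = (x %% b + b * (x %/ b))%N.
Proof. by rewrite {1}(divn_eq x b) addnC mulnC. Qed.

Lemma inW_lt u w : inW u w -> (w < b ^ u)%N.
Proof.
elim: u w => [|u IH] w /=; first by move/eqP->.
case/andP=> _ /IH h; rewrite (dm_eq w) expnS.
have := ltn_pmod w b_gt0; nia.
Qed.

Lemma inW_add u v x : inW (u + v) x = inW u (x %% b ^ u) && inW v (x %/ b ^ u).
Proof.
elim: u x => [|u IH] x /=; first by rewrite expn0 modn1 divn1.
rewrite IH -andbA; congr (_ && _).
  rewrite expnS; have h : (b %| b * b ^ u)%N by apply: dvdn_mulr.
  by rewrite -(modn_dvdm x h).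
rewrite expnS divnMA; congr (_ && _).
suff -> : ((x %% (b * b ^ u)) %/ b = (x %/ b) %% b ^ u)%N by [].
have hr := ltn_pmod x b_gt0.
have hbu : (0 < b ^ u)%N by rewrite expn_gt0 b_gt0.
have hq := ltn_pmod (x %/ b) hbu.
set r := (x %% b)%N in hr *; set q := (x %/ b)%N in hq *.
have ex : x = (q %/ b ^ u * (b * b ^ u) + (r + b * (q %% b ^ u)))%N.
  rewrite {1}(dm_eq x) -/r -/q {1}(divn_eq q (b ^ u)); ring.
rewrite {1}ex modnMDl modn_small; first by rewrite dm_div.
nia.
Qed.

Lemma inW_sum n (d : nat -> 'I_b) : (forall j, (j < n)%N -> d j \in D) ->
  inW n (\sum_(j < n) (d j : nat) * b ^ j)%N.
Proof.
elim: n d => [|n IH] d hd /=; first by rewrite big_ord0.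
rewrite big_ord_recl /=.
have -> : (\sum_(i < n) d (bump 0 i) * b ^ bump 0 i = b * \sum_(i < n) d i.+1 * b ^ i)%N.
  rewrite big_distrr /=; apply: eq_bigr => i _; rewrite /bump /= add1n expnS; ring.
rewrite expn0 muln1 dm_mod // dm_div //.
have h0 : dD (d 0%N) by apply/existsP; exists (d 0%N); rewrite hd ?eqxx.
rewrite h0 /=; apply: (IH (fun j => d j.+1)) => j hj; exact: hd.
Qed.

Lemma inW_digits n m : inW n m -> exists d : nat -> 'I_b,
  (forall j, (j < n)%N -> d j \in D) /\ m = (\sum_(j < n) (d j : nat) * b ^ j)%N.
Proof.
elim: n m => [|n IH] m /=.
  move/eqP->; exists (fun _ => Ordinal b_gt0); split=> //; by rewrite big_ord0.
case/andP=> /existsP [d0 /andP [hd0 /eqP e0]] /IH [d' [hd' em]].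
exists (fun j => if j is j'.+1 then d' j' else d0); split.
  by case=> [|j] //= /hd'.
rewrite big_ord_recl /= expn0 muln1 e0 {1}(dm_eq m) em; congr (_ + _)%N.
rewrite big_distrr /=; apply: eq_bigr => i _; rewrite /bump /= add1n expnS; ring.
Qed.

Lemma inC_Cb m : inC D m <-> Cb m.
Proof.
split.
  case=> kk [d [hd ->]]; exists kk.+1; split=> //; apply: inW_sum => j hj; exact: hd.
case=> v [hv /inW_digits [d [hd em]]]; exists v.-1, d; split.
  move=> j hj; apply: hd; lia.
by rewrite prednK.
Qed.

Lemma Cb_block p u w : (0 < p)%N -> (w < b ^ u)%N ->
  Cb (p * b ^ u + w) <-> Cb p /\ inW u w.
Proof.
move=> hp hw.
have hmod : ((p * b ^ u + w) %% b ^ u = w)%N by rewrite modnMDl modn_small.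
have hdiv : ((p * b ^ u + w) %/ b ^ u = p)%N
  by rewrite divnMDl ?expn_gt0 ?b_gt0 // divn_small // addn0.
split.
  case=> v [hv hW].
  have hlt := inW_lt hW.
  have huv : (u < v)%N.
    rewrite -(ltn_exp2l _ _ hb); apply: leq_ltn_trans hlt.
    have : (b ^ u <= p * b ^ u)%N by rewrite leq_pmull.
    lia.
  move: hW; rewrite -(subnKC (ltnW huv)) inW_add hmod hdiv => /andP [h1 h2].
  split=> //; exists (v - u)%N; split=> //; lia.
case=> [[v [hv hW]] hw'].
exists (u + v)%N; split; first lia.
by rewrite inW_add hmod hdiv hw' hW.
Qed.

Definition ds (n x : nat) : nat := (\sum_(i < n) (x %/ b ^ i %% b))%N.

Lemma ds_ext n e x : (x < b ^ n)%N -> ds (n + e) x = ds n x.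
Proof.
move=> hx; elim: e => [|e IH]; first by rewrite addn0.
rewrite addnS /ds big_ord_recr /= -/(ds _ _) IH divn_small ?mod0n ?addn0 //.
apply: (leq_trans hx); rewrite leq_exp2l //; lia.
Qed.

Lemma sdig_ds n x : (x < b ^ n)%N -> sdig b x = ds n x.
Proof.
move=> hx; rewrite /sdig -/(ds _ _).
have hx' : (x < b ^ x.+1)%N by apply: (ltn_trans (ltnSn x)); apply: ltn_expl.
case: (leqP n x.+1) => h.
  by rewrite -(subnKC h) ds_ext.
by rewrite -(subnKC (ltnW h)) ds_ext.
Qed.

Lemma ds_S n d y : (d < b)%N -> ds n.+1 (d + b * y) = (d + ds n y)%N.
Proof.
move=> hd; rewrite /ds big_ord_recl /= expn0 divn1 dm_mod //; congr (_ + _)%N.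
apply: eq_bigr => i _; rewrite /bump /= add1n expnS divnMA dm_div //.
Qed.

Lemma sdigS d y : (d < b)%N -> sdig b (d + b * y) = (d + sdig b y)%N.
Proof.
move=> hd.
have hy : (y < b ^ y.+1)%N by apply: (ltn_trans (ltnSn y)); apply: ltn_expl.
rewrite (sdig_ds hy) (@sdig_ds y.+2) ?ds_S //.
rewrite expnS; have := hy; nia.
Qed.

Lemma sdig_split p u w : (w < b ^ u)%N -> sdig b (p * b ^ u + w) = (sdig b p + sdig b w)%N.
Proof.
elim: u w => [|u IH] w hw.
  by move: hw; rewrite expn0 ltnS leqn0 => /eqP ->; rewrite muln1 addn0 /sdig big_ord1 mod0n addn0.
rewrite (dm_eq w).
have hr := ltn_pmod w b_gt0.
have -> : (p * b ^ u.+1 + (w %% b + b * (w %/ b)) = w %% b + b * (p * b ^ u + w %/ b))%N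
  by rewrite expnS; ring.
rewrite !sdigS // IH; first lia.
by rewrite ltn_divLR ?b_gt0 // mulnC -expnS.
Qed.

End Digits.

Set Implicit Arguments.
Unset Strict Implicit.

Section E.
Variable R : realType.

Lemma cmulE (a b c d : R) : (a +i* b) * (c +i* d) = (a * c - b * d) +i* (a * d + b * c).
Proof. by []. Qed.

Lemma eD (x y : R) : e (x + y) = e x * e y.
Proof.
rewrite /e cmulE mulrDr cosD sinD; congr (_ +i* _); ring.
Qed.

Lemma e0 : e (0 : R) = 1.
Proof. by rewrite /e mulr0 cos0 sin0. Qed.

Lemma e1 : e (1 : R) = 1.
Proof. by rewrite /e mulr1 mulr_natl cos2pi sin2pi. Qed.

Lemma e_nat n : e (n%:R : R) = 1.
Proof. by elim: n => [|n IH]; rewrite ?e0 // -addn1 natrD eD IH e1 mulr1. Qed.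

Lemma eN (x : R) : e (- x) * e x = 1.
Proof. by rewrite -eD addNr e0. Qed.

Lemma e_int (z : int) : e (z%:~R : R) = 1.
Proof.
case: z => n; first by rewrite e_nat.
have := eN ((n.+1)%:R); rewrite e_nat mulr1 => h.
by rewrite NegzE mulrNz h.
Qed.

Lemma eDint (x : R) (z : int) : e (x + z%:~R) = e x.
Proof. by rewrite eD e_int mulr1. Qed.

Lemma norm_e (x : R) : `|e x| = 1.
Proof.
by rewrite /e normc_def /= cos2Dsin2 sqrtr1.
Qed.

Lemma eMn (n : nat) (x : R) : e (n%:R * x) = e x ^+ n.
Proof.
elim: n => [|n IH]; first by rewrite mul0r e0 expr0.
by rewrite -addn1 natrD mulrDl mul1r eD IH addn1 exprSr.
Qed.

End E.

Set Implicit Arguments.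
Unset Strict Implicit.

Lemma sum_split (V : nmodType) (c N : nat) (h : nat -> V) :
  \sum_(0 <= w < c * N) h w = \sum_(0 <= j < N) \sum_(0 <= d < c) h (d + c * j)%N.
Proof.
elim: N => [|N IH]; first by rewrite muln0 !big_geq.
rewrite big_nat_recr // -IH mulnS addnC (big_cat_nat _ (n := c * N)) //=; last by rewrite leq_addr.
congr (_ + _).
rewrite -[X in \sum_(X <= _ < _) _]add0n big_addn addKn; apply: eq_bigr => i _; by rewrite addnC.
Qed.

Section Cyl.
Variable R : realType.
Variable b : nat.
Variable D : {set 'I_b}.
Hypothesis hb : (1 < b)%N.
Local Notation C := R[i].

Definition f (al be : R) (m : nat) : C := e (m%:R * al + (sdig b m)%:R * be).

Definition F (x : R) : C := \sum_(d in D) e ((d : nat)%:R * x).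

Definition Psi (be : R) (u p : nat) (al : R) : C :=
  \sum_(0 <= w < b ^ u) (if inW D u w then f al be (p * b ^ u + w) else 0).

Lemma sum_dD (h : nat -> C) : \sum_(0 <= d < b) (if dD D d then h d else 0) = \sum_(d in D) h d.
Proof.
rewrite big_mkord [in RHS]big_mkcond /=; apply: eq_bigr => i _.
have -> : dD D i = (i \in D).
  apply/existsP/idP => [[d /andP [hd /eqP hdi]]|hi]; last by exists i; rewrite hi eqxx.
  by have -> : i = d by apply: val_inj.
by [].
Qed.

Lemma Psi_rec be u p al : Psi be u.+1 p al = F (al + be) * Psi be u p (b%:R * al).
Proof.
rewrite /Psi expnS sum_split exchange_big /=.
rewrite /F big_distrl /= -(sum_dD (fun d => e (d%:R * (al + be)) * Psi be u p (b%:R * al))).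
apply: eq_big_nat => d /andP [_ hd].
under eq_bigr do rewrite dm_mod // dm_div //.
case: (dD D d) => /=; last by rewrite big1.
rewrite /Psi big_distrr /=; apply: eq_bigr => j _.
case: (inW D u j) => /=; last by rewrite mulr0.
rewrite /f.
have -> : (p * (b * b ^ u) + (d + b * j) = d + b * (p * b ^ u + j))%N by ring.
rewrite sdigS // -eD; congr e.
rewrite !natrD !natrM; ring.
Qed.

Lemma norm_Psi be u : forall p al,
  `|Psi be u p al| = \prod_(j < u) `|F (b%:R ^+ j * al + be)|.
Proof.
elim: u => [|u IH] p al.
  rewrite big_ord0 /Psi expn0 big_nat1 /= norm_e //.
rewrite Psi_rec normrM IH big_ord_recl /= expr0 mul1r; congr (_ * _).
apply: eq_bigr => i _; by rewrite /bump /= add1n exprSr mulrA.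
Qed.

Lemma cnt_Psi u : \sum_(0 <= w < b ^ u) (if inW D u w then 1 else 0 : C) = (#|D|%:R) ^+ u.
Proof.
have h : Psi 0 u 0 0 = \sum_(0 <= w < b ^ u) (if inW D u w then 1 else 0 : C).
  apply: eq_bigr => w _; case: ifP => // _; by rewrite /f !mulr0 addr0 e0.
rewrite -h -[Psi _ _ _ _]ger0_norm; last first.
  rewrite h; apply: sumr_ge0 => w _; case: ifP => //.
have hF : F 0 = #|D|%:R.
  rewrite /F; under eq_bigr do rewrite mulr0 e0.
  by rewrite sumr_const.
rewrite norm_Psi; under eq_bigr do rewrite mulr0 addr0 hF.
by rewrite prodr_const card_ord normr_nat.
Qed.

End Cyl.

Set Implicit Arguments.
Unset Strict Implicit.

Section Block.
Variable K : numDomainType.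
Variable V : normedZmodType K.
Variables (T : nat) (h : nat -> V) (c : nat -> K) (H rho : K).
Hypothesis hT : (0 < T)%N.
Hypothesis hc : forall m, 0 <= c m.
Hypothesis hh : forall m, `|h m| <= H.
Hypothesis hrho : 0 <= rho.
Hypothesis hblock : forall p, (0 < p)%N ->
  `|\sum_(p * T <= m < p * T + T) h m| <= rho * \sum_(p * T <= m < p * T + T) c m.

Lemma H_ge0 : 0 <= H. Proof. exact: le_trans (normr_ge0 _) (hh 0). Qed.

Lemma sumc_ge0 X Y : 0 <= \sum_(X <= m < Y) c m.
Proof. by apply: sumr_ge0 => m _. Qed.

Lemma blocks p n : (0 < p)%N ->
  `|\sum_(p * T <= m < (p + n) * T) h m| <= rho * \sum_(p * T <= m < (p + n) * T) c m.
Proof.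
move=> hp; elim: n => [|n IH]; first by rewrite addn0 !big_geq // normr0 mulr0.
have e1 : ((p + n.+1) * T = (p + n) * T + T)%N by ring.
have l1 : (p * T <= (p + n) * T)%N by rewrite leq_mul2r leq_addr orbT.
have l2 : ((p + n) * T <= (p + n) * T + T)%N by rewrite leq_addr.
rewrite e1 !(@big_cat_nat _ _ _ ((p + n) * T) (p * T) ((p + n) * T + T)) //=.
rewrite mulrDr; apply: le_trans (ler_normD _ _) _; apply: lerD => //.
by apply: hblock; lia.
Qed.

Lemma trivb X Y : (X <= Y)%N -> `|\sum_(X <= m < Y) h m| <= (Y - X)%:R * H.
Proof.
move=> _; apply: le_trans (ler_norm_sum _ _ _) _.
apply: le_trans (ler_sum _ (fun i _ => hh i)) _.
by rewrite sumr_const_nat mulr_natl.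
Qed.

Lemma block_bound A B : (A <= B)%N ->
  `|\sum_(A <= m < B) h m| <= rho * \sum_(A <= m < B) c m + (2 * T)%:R * H.
Proof.
move=> hAB.
have hH := H_ge0.
set a := (A %/ T).+1%N; set bb := (B %/ T)%N.
have eA := divn_eq A T; have rA := ltn_pmod A hT.
have eB := divn_eq B T; have rB := ltn_pmod B hT.
case: (leqP bb a) => hab.
  apply: le_trans (trivb hAB) _.
  rewrite -[X in X <= _]add0r; apply: lerD.
    by apply: mulr_ge0 => //; apply: sumc_ge0.
  apply: ler_wpM2r => //; rewrite ler_nat.
  have : (bb * T <= a * T)%N by rewrite leq_mul2r hab orbT.
  rewrite /a /bb in hab *; nia.
have h1 : (A <= a * T)%N by rewrite /a; nia.
have h2 : (a * T <= bb * T)%N by rewrite leq_mul2r ltnW ?orbT.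
have h3 : (bb * T <= B)%N by rewrite /bb; nia.
have h23 := leq_trans h2 h3.
rewrite !(big_cat_nat h1 h23) /= !(big_cat_nat h2 h3) /=.
apply: le_trans (ler_normD _ _) _.
have hmid := blocks (bb - a)%N (ltn0Sn (A %/ T)%N).
rewrite -/a subnKC in hmid; last exact: ltnW.
have -> : (2 * T)%:R * H = (T%:R * H) + (T%:R * H).
  by rewrite -mulrDl -natrD mul2n addnn.
rewrite !mulrDr.
set cA := \sum_(A <= m < a * T) c m.
set cM := \sum_(a * T <= m < bb * T) c m.
set cB := \sum_(bb * T <= m < B) c m.
have hcA : 0 <= rho * cA by apply: mulr_ge0 => //; apply: sumc_ge0.
have hcB : 0 <= rho * cB by apply: mulr_ge0 => //; apply: sumc_ge0.
have t1 : `|\sum_(A <= m < a * T) h m| <= T%:R * H.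
  apply: le_trans (trivb h1) _; apply: ler_wpM2r => //; rewrite ler_nat /a; nia.
have t3 : `|\sum_(bb * T <= m < B) h m| <= T%:R * H.
  apply: le_trans (trivb h3) _; apply: ler_wpM2r => //; rewrite ler_nat /bb; nia.
have t2 : `|\sum_(a * T <= m < bb * T) h m + \sum_(bb * T <= m < B) h m| <= rho * cM + T%:R * H.
  apply: le_trans (ler_normD _ _) _; exact: lerD.
apply: le_trans (lerD t1 t2) _.
set x := T%:R * H; set y := rho * cM.
have e : rho * cA + (y + rho * cB) + (x + x) = (x + (y + x)) + (rho * cA + rho * cB).
  by ring.
rewrite e lerDl; exact: addr_ge0.
Qed.

End Block.

Set Implicit Arguments.
Unset Strict Implicit.

Section Enum.
Variable b : nat.
Variable D : {set 'I_b}.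
Variable k : nat -> nat.
Hypothesis hk_incr : forall n, (k n < k n.+1)%N.
Hypothesis hk_range : forall m, inC D m <-> exists n, k n = m.

Lemma kmono i j : (i < j)%N -> (k i < k j)%N.
Proof.
elim: j => [//|j IH]; rewrite ltnS leq_eqVlt => /orP [/eqP -> //|/IH h].
exact: ltn_trans h (hk_incr j).
Qed.

Lemma kmono_le i j : (i <= j)%N -> (k i <= k j)%N.
Proof. rewrite leq_eqVlt => /orP [/eqP -> //|/kmono]; exact: ltnW. Qed.

Lemma reindex (V : nmodType) (h : nat -> V) M N : (M <= N)%N ->
  \sum_(M <= i < N) h (k i) =
  \sum_(k M <= m < k N) (if `[< inC D m >] then h m else 0).
Proof.
elim: N => [|N IH]; first by rewrite leqn0 => /eqP ->; rewrite !big_geq.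
rewrite leq_eqVlt => /orP [/eqP <-|]; first by rewrite !big_geq.
rewrite ltnS => hMN.
rewrite big_nat_recr //= IH //.
rewrite [in RHS](big_cat_nat _ (n := k N)) ?kmono_le //=.
congr (_ + _).
rewrite big_ltn // (asboolT (_ : inC D (k N))); last by apply/hk_range; exists N.
rewrite big1_seq ?addr0 // => m; rewrite mem_index_iota => /andP [h1 h2].
case: asboolP => // /hk_range [n en]; exfalso.
rewrite -en in h1 h2.
have : (N < n)%N by case: (leqP n N) => // /kmono_le; lia.
have : (n < N.+1)%N by case: (leqP N.+1 n) => // /kmono_le; lia.
lia.
Qed.

End Enum.

Set Implicit Arguments.
Unset Strict Implicit.

Section NC.
Variable R : realType.
Local Notation C := R[i].

Definition nc (z : C) : R := Num.sqrt (complex.Re z ^+ 2 + complex.Im z ^+ 2).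

Lemma norm_nc z : `|z| = (nc z)%:C.
Proof. by rewrite normc_def. Qed.

Lemma nc_ge0 z : 0 <= nc z.
Proof. exact: sqrtr_ge0. Qed.

Lemma ncD z w : nc (z + w) <= nc z + nc w.
Proof. by rewrite -lecR rmorphD /= -!norm_nc ler_normD. Qed.

Lemma ncB z w : nc (z - w) <= nc z + nc w.
Proof. by rewrite -lecR rmorphD /= -!norm_nc -(normrN w) ler_normD. Qed.

Lemma ncM z w : nc (z * w) = nc z * nc w.
Proof. by apply: complexI; rewrite rmorphM /= -!norm_nc normrM. Qed.

Lemma ncN z : nc (- z) = nc z.
Proof. by apply: complexI; rewrite -!norm_nc normrN. Qed.

Lemma nc_e (x : R) : nc (e x) = 1.
Proof. by apply: complexI; rewrite -!norm_nc norm_e. Qed.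

Lemma nc_Re z : `|complex.Re z| <= nc z.
Proof.
rewrite /nc -sqrtr_sqr ler_sqrt; last by rewrite addr_ge0 ?sqr_ge0.
by rewrite lerDl sqr_ge0.
Qed.

Lemma nc_sqr z : nc z ^+ 2 = complex.Re z ^+ 2 + complex.Im z ^+ 2.
Proof. by rewrite /nc sqr_sqrtr // addr_ge0 ?sqr_ge0. Qed.

Lemma nc_sum (I : Type) (r : seq I) (P : pred I) (F : I -> C) :
  nc (\sum_(i <- r | P i) F i) <= \sum_(i <- r | P i) nc (F i).
Proof.
rewrite -lecR rmorph_sum /= -norm_nc.
apply: le_trans (ler_norm_sum _ _ _) _; apply: ler_sum => i _; by rewrite norm_nc.
Qed.

Lemma nc_prod (I : Type) (r : seq I) (P : pred I) (F : I -> C) :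
  nc (\prod_(i <- r | P i) F i) = \prod_(i <- r | P i) nc (F i).
Proof.
apply: complexI; rewrite rmorph_prod /= -norm_nc normr_prod.
by apply: eq_bigr => i _; rewrite norm_nc.
Qed.

Lemma nc_expn_sub1 (w : C) n : nc w = 1 -> nc (w ^+ n - 1) <= n%:R * nc (w - 1).
Proof.
move=> hw; elim: n => [|n IH]; first by rewrite expr0 subrr /nc /= expr0n /= addr0 sqrtr0 mul0r.
have -> : w ^+ n.+1 - 1 = w * (w ^+ n - 1) + (w - 1) by rewrite exprS; ring.
apply: le_trans (ncD _ _) _; rewrite ncM hw mul1r -addn1 natrD mulrDl mul1r.
by apply: lerD.
Qed.

Lemma cos_le (x y : R) : 0 <= x -> x <= y -> y <= pi -> cos y <= cos x.
Proof.
move=> h0 hxy hy; rewrite le_eqVlt in hxy; case/orP: hxy => [/eqP -> //|hxy].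
have hx : x \in `[0, pi]%R by rewrite in_itv /= h0 /= (le_trans (ltW hxy) hy).
have hy' : y \in `[0, pi]%R by rewrite in_itv /= hy andbT (le_trans h0 (ltW hxy)).
by rewrite ltW // ltr_cos.
Qed.

Lemma cos_lt1 (x : R) : 0 < x -> x <= pi -> cos x < 1.
Proof.
move=> h0 hx; rewrite -[X in _ < X]cos0 ltr_cos //.
  by rewrite in_itv /= lexx pi_ge0.
by rewrite in_itv /= hx ltW.
Qed.

Lemma e_small (eps : R) : 0 < eps -> eps <= 1/2 ->
  exists2 del : R, 0 < del &
  forall z : R, `|z| <= 1/2 -> nc (e z - 1) < del -> `|z| < eps.
Proof.
move=> he he2.
have hpi := pi_gt0 R.
have h2pe : 2 * pi * eps <= pi.
  rewrite mulrAC -[X in _ <= X]mul1r ler_pM2r //; lra.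
exists (1 - cos (2 * pi * eps)).
  rewrite subr_gt0 cos_lt1 //; by rewrite !mulr_gt0.
move=> z hz hnc; rewrite ltNge; apply/negP => hze.
have h1 : 1 - cos (2 * pi * z) <= nc (e z - 1).
  apply: le_trans (nc_Re _); rewrite /e /=.
  by rewrite -normrN opprB ler_norm.
have hcz : cos (2 * pi * z) = cos (2 * pi * `|z|).
  case: (lerP 0 z) => hz0; first by rewrite ger0_norm.
  by rewrite ltr0_norm // mulrN cosN.
have h2 : cos (2 * pi * z) <= cos (2 * pi * eps).
  rewrite hcz; apply: cos_le.
  - by rewrite !mulr_ge0 // ltW.
  - by rewrite ler_pM2l // mulr_gt0.
  - rewrite mulrAC -[X in _ <= X]mul1r ler_pM2r //; lra.
lra.
Qed.


Definition round (y : R) : int := Num.floor (y + 1/2).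

Lemma round_bound y : `|y - (round y)%:~R| <= 1/2.
Proof.
have h1 := floor_le (y + 1/2); have h2 := floorD1_gt (y + 1/2).
rewrite intrD /= -/(round y) in h1 h2 *.
rewrite ler_norml; apply/andP; split; lra.
Qed.

Lemma e_roundE y : e y = e (y - (round y)%:~R).
Proof.
have := eDint (y - (round y)%:~R) (round y).
by rewrite subrK => ->.
Qed.

Lemma dist_small (eps : R) : 0 < eps -> eps <= 1/2 ->
  exists2 del : R, 0 < del &
  forall y : R, nc (e y - 1) < del -> `|y - (round y)%:~R| < eps.
Proof.
move=> he he2; have [del hdel H] := e_small he he2.
exists del => // y hy; apply: H; first exact: round_bound.
by rewrite -e_roundE.
Qed.

Lemma int_small (z : int) : `|(z%:~R : R)| < 1 -> z = 0.
Proof.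
rewrite -intr_norm -[1]/((1%:Z)%:~R) ltr_int => h.
move: h; case: z => n /=; rewrite ?NegzE; lia.
Qed.

Lemma nc_e_sub (x y : R) : nc (e x - e y) = nc (e (x - y) - 1).
Proof.
have -> : e x - e y = e y * (e (x - y) - 1) by rewrite mulrBr mulr1 -eD addrCA subrr addr0.
by rewrite ncM nc_e mul1r.
Qed.
End NC.

Section FQ.
Variable R : realType.
Variable b : nat.
Variable D : {set 'I_b}.
Hypothesis hb : (1 < b)%N.
Local Notation C := R[i].
Local Notation q := (#|D|%:R : R).

Lemma nF_le (x : R) : nc (F D x) <= q.
Proof.
apply: le_trans (nc_sum _ _ _) _.
under eq_bigr do rewrite nc_e.
by rewrite sumr_const.
Qed.

Lemma pair_bound (d1 d2 : 'I_b) (x : R) : d1 \in D -> d2 \in D -> d1 != d2 ->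
  nc (e ((d1 : nat)%:R * x) - e ((d2 : nat)%:R * x)) ^+ 2 <= 4 * (q - nc (F D x)).
Proof.
move=> h1 h2 h12.
set z1 := e ((d1 : nat)%:R * x); set z2 := e ((d2 : nat)%:R * x).
have hrest : nc (F D x) <= nc (z1 + z2) + (q - 2).
  have hq : q = 1 + 1 + \sum_(i in D | (i != d1) && (i != d2)) (1 : R).
    rewrite /= -sumr_const (bigD1 d1) //= (bigD1 d2) /=; last by rewrite h2 eq_sym.
    rewrite addrA; congr (_ + _); apply: eq_bigl => i; by rewrite andbA.
  have hF : F D x = z1 + z2 + \sum_(i in D | (i != d1) && (i != d2)) e ((i : nat)%:R * x).
    rewrite /F (bigD1 d1) //= (bigD1 d2) /=; last by rewrite h2 eq_sym.
    rewrite addrA; congr (_ + _); apply: eq_bigl => i; by rewrite andbA.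
  rewrite hF hq; apply: le_trans (ncD _ _) _.
  have -> : 1 + 1 + \sum_(i in D | (i != d1) && (i != d2)) (1 : R) - 2 =
           \sum_(i in D | (i != d1) && (i != d2)) (1 : R) by ring.
  apply: lerD => //; apply: le_trans (nc_sum _ _ _) _.
  by under eq_bigr do rewrite nc_e.
have hp : nc (z1 - z2) ^+ 2 + nc (z1 + z2) ^+ 2 = 4.
  have u1 := nc_e ((d1 : nat)%:R * x); have u2 := nc_e ((d2 : nat)%:R * x).
  rewrite -/z1 -/z2 in u1 u2.
  have s1 : nc z1 ^+ 2 = 1 by rewrite u1 expr1n.
  have s2 : nc z2 ^+ 2 = 1 by rewrite u2 expr1n.
  move: s1 s2; rewrite !nc_sqr; clear hrest u1 u2; case: z1 => a1 b1; case: z2 => a2 b2 /=.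
  move=> s1 s2; nra.
have hn2 : nc (z1 + z2) <= 2.
  apply: le_trans (ncD _ _) _; rewrite /z1 /z2 !nc_e; lra.
have hn0 := nc_ge0 (z1 + z2).
nra.
Qed.

End FQ.

Section Qsec.
Variable R : realType.

Definition Qe (X : nat -> R) (n : nat) := forall eta : R, 0 < eta ->
  exists J, forall j, (J <= j)%N -> nc (e (n%:R * X j) - 1) < eta.

Lemma Qe0 X : Qe X 0.
Proof.
move=> eta he; exists 0%N => j _; rewrite mul0r e0 subrr.
by rewrite /nc /= expr0n /= addr0 sqrtr0.
Qed.

Lemma Qe_join X a c (P : nat -> R -> R -> R) :
  Qe X a -> Qe X c ->
  (forall j, nc (e (P j 0 0) - 1) <= nc (e (a%:R * X j) - 1) + nc (e (c%:R * X j) - 1)) ->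
  forall eta, 0 < eta -> exists J, forall j, (J <= j)%N -> nc (e (P j 0 0) - 1) < eta.
Proof.
move=> Ha Hc Hle eta he.
have he2 : 0 < eta / 2 by rewrite divr_gt0.
have [J1 H1] := Ha _ he2; have [J2 H2] := Hc _ he2.
exists (maxn J1 J2) => j hj; apply: le_lt_trans (Hle j) _.
have := H1 j (leq_trans (leq_maxl _ _) hj); have := H2 j (leq_trans (leq_maxr _ _) hj).
lra.
Qed.

Lemma QeD X a c : Qe X a -> Qe X c -> Qe X (a + c).
Proof.
move=> Ha Hc; apply: (Qe_join (P := fun j _ _ => (a + c)%N%:R * X j) Ha Hc) => j.
rewrite natrD mulrDl eD.
have -> : e (a%:R * X j) * e (c%:R * X j) - 1 =
   e (a%:R * X j) * (e (c%:R * X j) - 1) + (e (a%:R * X j) - 1) by ring.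
apply: le_trans (ncD _ _) _; rewrite ncM nc_e mul1r addrC //.
Qed.

Lemma QeB X a c : (c <= a)%N -> Qe X a -> Qe X c -> Qe X (a - c).
Proof.
move=> hca Ha Hc; apply: (Qe_join (P := fun j _ _ => (a - c)%N%:R * X j) Ha Hc) => j.
rewrite natrB // mulrBl -nc_e_sub.
have -> : e (a%:R * X j) - e (c%:R * X j) = (e (a%:R * X j) - 1) - (e (c%:R * X j) - 1) by ring.
exact: ncB.
Qed.

Lemma QeM X a n : Qe X a -> Qe X (n * a).
Proof.
move=> Ha; elim: n => [|n IH]; first by rewrite mul0n; exact: Qe0.
by rewrite mulSn; apply: QeD.
Qed.

Lemma Qegcd X a c : Qe X a -> Qe X c -> Qe X (gcdn a c).
Proof.
move=> Ha Hc; case: (posnP a) => [->|ha]; first by rewrite gcd0n.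
case: (egcdnP c ha) => km kn hkm _.
have -> : gcdn a c = (km * a - kn * c)%N by rewrite hkm addKn.
apply: QeB; first by rewrite hkm leq_addr.
  exact: QeM.
exact: QeM.
Qed.

End Qsec.

Section ResSec.
Variable R : realType.
Variable b : nat.
Variable D : {set 'I_b}.
Hypothesis hb : (1 < b)%N.
Local Notation q := (#|D|%:R : R).

Lemma Qe_sgcd (X : nat -> R) :
  (forall eta : R, 0 < eta -> exists J, forall j, (J <= j)%N -> q - nc (F D (X j)) < eta) ->
  Qe X (sgcd D).
Proof.
move=> Hq.
have Hpair : forall d1 d2 : 'I_b, d1 \in D -> d2 \in D -> (d2 < d1)%N -> Qe X (d1 - d2).
  move=> d1 d2 h1 h2 hlt eta he.
  have he2 : 0 < eta ^+ 2 / 4 by rewrite divr_gt0 // exprn_gt0.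
  have [J HJ] := Hq _ he2; exists J => j hj.
  have hne : d1 != d2 by rewrite neq_ltn hlt orbT.
  have := pair_bound (X j) h1 h2 hne.
  rewrite nc_e_sub -mulrBl -natrB ?(ltnW hlt) //.
  have := HJ j hj; have := nc_ge0 (e ((d1 - d2)%N%:R * X j) - 1) => h0 hb1 hsq.
  have hsq' : nc (e ((d1 - d2)%N%:R * X j) - 1) ^+ 2 < eta ^+ 2 by lra.
  nra.
rewrite /sgcd; apply: big_ind => //; first exact: Qe0.
  by move=> x y; apply: Qegcd.
move=> d1 h1; apply: big_ind => //; first exact: Qe0.
  by move=> x y; apply: Qegcd.
move=> d2 h2.
case: (ltngtP d1 d2) => h.
- have -> : ((d1 - d2) + (d2 - d1) = d2 - d1)%N by lia.
  exact: Hpair.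
- have -> : ((d1 - d2) + (d2 - d1) = d1 - d2)%N by lia.
  exact: Hpair.
- have -> : ((d1 - d2) + (d2 - d1) = 0)%N by lia.
  exact: Qe0.
Qed.

End ResSec.

Section Derive.
Variable R : realType.
Variable b : nat.
Hypothesis hb : (1 < b)%N.

Lemma const_int (c : R) : (forall eps : R, 0 < eps -> eps <= 1/2 -> `|c - (round c)%:~R| < eps) ->
  c = (round c)%:~R.
Proof.
move=> H; apply/eqP; rewrite -subr_eq0 -normr_eq0; apply/negPn/negP => hne.
have hp : 0 < `|c - (round c)%:~R| by rewrite lt_neqAle eq_sym hne normr_ge0.
have := H (Num.min `|c - (round c)%:~R| (1/2)).
rewrite lt_min hp /= ge_min lexx orbT /=.
have h12 : (0:R) < 1/2 by lra.
move=> /(_ h12 isT); by rewrite lt_min ltxx.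
Qed.

Lemma res_derive (A Bt : R) :
  (forall eta : R, 0 < eta -> exists J, forall j, (J <= j)%N ->
     nc (e (b%:R ^+ j * A + Bt) - 1) < eta) ->
  resonant b A Bt.
Proof.
move=> HY.
set Y := fun j => b%:R ^+ j * A + Bt.
have hbR : (1 : R) < b%:R by rewrite ltr1n.
have hb0 : (0 : R) < b%:R by lra.
set c := (1 - b%:R) * Bt.
have hc : forall j, Y j.+1 - b%:R * Y j = c.
  move=> j; rewrite /Y /c exprS; ring.
have ci : c = (round c)%:~R.
  apply: const_int => eps he he2.
  have [del hdel Hd] := dist_small he he2; apply: Hd.
  have hd2 : 0 < del / (b%:R + 1) by rewrite divr_gt0 //; lra.
  have [J HJ] := HY _ hd2.
  have h1 := HJ J (leqnn _); have h2 := HJ J.+1 (leqnSn _).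
  rewrite -(hc J) -nc_e_sub.
  have -> : e (Y J.+1) - e (b%:R * Y J) = (e (Y J.+1) - 1) - (e (b%:R * Y J) - 1) by ring.
  apply: le_lt_trans (ncB _ _) _.
  rewrite eMn.
  have := nc_expn_sub1 b (nc_e (Y J)) => h3.
  have hnn := nc_ge0 (e (Y J) - 1).
  have e1 : del = (b%:R + 1) * (del / (b%:R + 1)) by field; lra.
  rewrite e1.
  rewrite /Y in h3 hnn.
  nra.
set eps0 : R := 1 / (2 * b%:R).
have he0 : 0 < eps0 by rewrite /eps0 divr_gt0 //; lra.
have he0' : eps0 <= 1/2.
  rewrite /eps0 ler_pdivrMr; last lra.
  rewrite mulrC mulrA; nra.
have hbe : b%:R * eps0 = 1/2 by rewrite /eps0; field; lra.
have [del hdel Hd] := dist_small he0 he0'.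
have [J HJ] := HY _ hdel.
set z := fun j => Y j - (round (Y j))%:~R.
have hz : forall j, (J <= j)%N -> `|z j| < eps0 by move=> j hj; apply: Hd; apply: HJ.
have hrec : forall j, (J <= j)%N -> z j.+1 = b%:R * z j.
  move=> j hj.
  set w := (round c - round (Y j.+1) + b%:Z * round (Y j))%R.
  have hw : z j.+1 - b%:R * z j = w%:~R.
    rewrite /z /w !intrD intrM /= -ci -(hc j); rewrite intrN. ring.
  have hw1 : `|(w%:~R : R)| < 1.
    rewrite -hw; apply: le_lt_trans (ler_normB _ _) _.
    rewrite normrM ger0_norm ?ler0n //.
    have := hz j hj; have := hz j.+1 (leqW hj) => h1 h2.
    have : b%:R * `|z j| < 1/2 by rewrite -hbe ltr_pM2l.
    lra.
  apply/eqP; rewrite -subr_eq0 hw (int_small hw1) //.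
have hpow : forall m, z (J + m)%N = b%:R ^+ m * z J.
  elim=> [|m IH]; first by rewrite addn0 expr0 mul1r.
  by rewrite addnS hrec ?leq_addr // IH exprS mulrA.
have zJ0 : z J = 0.
  apply/eqP; apply/negPn/negP => hne.
  have hp : 0 < `|z J| by rewrite normr_gt0.
  have hpos : 0 <= (`|z J|)^-1 by rewrite invr_ge0 ltW.
  have hab := archi_boundP hpos.
  set n := Num.Def.archi_bound (`|z J|)^-1 in hab.
  have hnb : (n%:R : R) <= b%:R ^+ n.
    rewrite -natrX ler_nat; apply: ltnW; exact: ltn_expl.
  have := hz (J + n)%N (leq_addr _ _); rewrite hpow normrM normrX ger0_norm ?ler0n //.
  have h1 : 1 < n%:R * `|z J|.
    by rewrite -ltr_pdivrMr // div1r.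
  have h2 : n%:R * `|z J| <= b%:R ^+ n * `|z J| by rewrite ler_pM2r.
  have h3 : eps0 <= 1/2 := he0'.
  lra.
set a := round c.
set nJ := round (Y J).
have eYJ : Y J = nJ%:~R by apply/eqP; rewrite -subr_eq0; apply/eqP; exact: zJ0.
exists a, (nJ - a * (\sum_(i < J) b ^ i)%N%:Z)%R, J%:Z; split; last first.
  exists 0; rewrite addr0.
  have : c = a%:~R := ci.
  rewrite /c => hca.
  have hb1 : b%:R - 1 != (0 : R) by rewrite subr_eq0 gt_eqF.
  rewrite -hca; field; lra.
exists 0; rewrite addr0.
have hS : ((\sum_(i < J) b ^ i)%N%:R : R) * (b%:R - 1) = b%:R ^+ J - 1.
  rewrite subrX1 mulrC natr_sum; congr (_ * _); apply: eq_bigr => i _; by rewrite natrX.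
have hb1 : b%:R - 1 != (0 : R) by rewrite subr_eq0 gt_eqF.
have hbJ : b%:R ^+ J != (0 : R) by rewrite expf_neq0 // gt_eqF.
have hBt : Bt = - (a%:~R / (b%:R - 1)).
  have : c = a%:~R := ci.
  rewrite /c => hca; rewrite -hca; field; lra.
have hA : A = (nJ%:~R - Bt) / b%:R ^+ J.
  rewrite -eYJ /Y; field; done.
rewrite intrB intrM /=.
rewrite -[(b%:R : R) ^ J%:Z]/(b%:R ^+ J).
set S := ((\sum_(i < J) b ^ i)%N%:R : R) in hS *.
have -> : ((\sum_(i < J) b ^ i)%N%:Z%:~R : R) = S by rewrite /S.
have hS' : S = (b%:R ^+ J - 1) / (b%:R - 1) by rewrite -hS; field.
rewrite hA hBt hS'; field; by rewrite hbJ hb1.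
Qed.

End Derive.

Set Implicit Arguments.
Unset Strict Implicit.

Section Prod.
Variable R : realType.

Lemma bernoulli (eta : R) m : 0 <= eta -> 1 + m%:R * eta <= (1 + eta) ^+ m.
Proof.
move=> he; elim: m => [|m IH]; first by rewrite mul0r addr0 expr0.
rewrite exprS -addn1 natrD mulrDl mul1r.
have h1 : 0 <= (1 + eta) ^+ m by rewrite exprn_ge0 // addr_ge0.
have hm : (0 : R) <= m%:R by rewrite ler0n.
have h2 : (1 + eta) * (1 + m%:R * eta) <= (1 + eta) * (1 + eta) ^+ m.
  by rewrite ler_wpM2l // addr_ge0.
nra.
Qed.

Lemma geo_small (eta eps : R) : 0 < eta -> eta <= 1 -> 0 < eps ->
  exists m, (1 - eta) ^+ m <= eps.
Proof.
move=> he he1 hep.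
have hpos : 0 <= (eps * eta)^-1 by rewrite invr_ge0 mulr_ge0 // ltW.
have hab := archi_boundP hpos.
set m := Num.Def.archi_bound _ in hab.
exists m.
have hb := bernoulli m (ltW he).
have hprod : ((1 - eta) * (1 + eta)) ^+ m <= 1.
  apply: exprn_ile1; nra.
rewrite exprMn in hprod.
have h0 : 0 <= (1 - eta) ^+ m by rewrite exprn_ge0 // subr_ge0.
have h1 : 1 < m%:R * (eps * eta).
  by rewrite -ltr_pdivrMr ?mulr_gt0 // div1r.
have hme : 1 < eps * (1 + m%:R * eta) by nra.
have hXZ : (1 - eta) ^+ m * (1 + m%:R * eta) <= (1 - eta) ^+ m * (1 + eta) ^+ m.
  by rewrite ler_wpM2l.
have hZ : 0 < 1 + m%:R * eta by nra.
nra.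
Qed.

Lemma prod_mono (G : nat -> R) u v : (forall j, 0 <= G j <= 1) -> (u <= v)%N ->
  \prod_(0 <= j < v) G j <= \prod_(0 <= j < u) G j.
Proof.
move=> hG huv; rewrite (big_cat_nat _ (n := u)) //=.
have h1 : 0 <= \prod_(0 <= j < u) G j by apply: prodr_ge0 => j _; case/andP: (hG j).
have h2 : \prod_(u <= j < v) G j <= 1.
  apply: prodr_ile1 => j _; exact: hG.
have h3 : 0 <= \prod_(u <= j < v) G j by apply: prodr_ge0 => j _; case/andP: (hG j).
nra.
Qed.

Lemma prod_small (G : nat -> R) (eta : R) : (forall j, 0 <= G j <= 1) -> 0 < eta ->
  (forall J, exists2 j, (J <= j)%N & G j <= 1 - eta) ->
  forall eps, 0 < eps -> exists u, \prod_(0 <= j < u) G j <= eps.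
Proof.
move=> hG he Hinf eps hep.
have heta1 : eta <= 1.
  have [j _ hj] := Hinf 0%N; case/andP: (hG j) => h0 _; lra.
have step : forall m, exists u, \prod_(0 <= j < u) G j <= (1 - eta) ^+ m.
  elim=> [|m [u hu]]; first by exists 0%N; rewrite big_geq // expr0.
  have [j hj hGj] := Hinf u.
  exists j.+1; rewrite big_nat_recr //= exprS.
  have := prod_mono hG hj.
  have h0 : 0 <= \prod_(0 <= i < j) G i by apply: prodr_ge0 => i _; case/andP: (hG i).
  have h1 : 0 <= G j by case/andP: (hG j).
  have h2 : 0 <= (1 - eta) ^+ m by rewrite exprn_ge0 // subr_ge0.
  move=> hm; nra.
have [m hm] := geo_small he heta1 hep.
have [u hu] := step m; exists u; exact: le_trans hm.
Qed.

End Prod.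

Section NR.
Variable R : realType.
Variable b : nat.
Variable D : {set 'I_b}.
Hypothesis hb : (1 < b)%N.
Hypothesis hD : (2 <= #|D|)%N.
Local Notation q := (#|D|%:R : R).

Lemma nonres_prod (al be : R) :
  ~ resonant b ((sgcd D)%:R * al) ((sgcd D)%:R * be) ->
  forall eps : R, 0 < eps -> exists u,
    \prod_(j < u) nc (F D (b%:R ^+ j * al + be)) <= eps * q ^+ u.
Proof.
move=> Hnr eps he; apply: NNPP => Hno.
have Hall : forall u, eps * q ^+ u < \prod_(j < u) nc (F D (b%:R ^+ j * al + be)).
  move=> u; rewrite ltNge; apply/negP => h; apply: Hno; by exists u.
set X := fun j => b%:R ^+ j * al + be.
have hq : (0 : R) < q by rewrite ltr0n; lia.
have Hq : forall eta : R, 0 < eta -> exists J, forall j, (J <= j)%N -> q - nc (F D (X j)) < eta.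
  move=> eta heta; apply: NNPP => Hn.
  set G := fun j => nc (F D (X j)) / q.
  have hG : forall j, 0 <= G j <= 1.
    move=> j; apply/andP; split; first by rewrite /G divr_ge0 ?nc_ge0 // ltW.
    rewrite /G ler_pdivrMr // mul1r; exact: nF_le.
  have Hinf : forall J, exists2 j, (J <= j)%N & G j <= 1 - eta / q.
    move=> J; have [j hj] := not_all_ex_not _ _ (not_ex_all_not _ _ Hn J).
    exists j.
      by apply: NNPP => h; apply: hj => h'; exfalso; exact: h.
    have : ~ (q - nc (F D (X j)) < eta) by move=> h; apply: hj.
    move/negP; rewrite -leNgt => h.
    rewrite /G ler_pdivrMr // mulrBl mul1r divfK ?gt_eqF //; lra.
  have hq' : 0 < eta / q by rewrite divr_gt0.
  have [u hu] := prod_small hG hq' Hinf he.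
  have hG' : \prod_(0 <= j < u) G j = (\prod_(0 <= j < u) nc (F D (X j))) / q ^+ u.
    rewrite /G prodf_div; congr (_ / _).
    by rewrite prodr_const_nat subn0.
  rewrite hG' ler_pdivrMr ?exprn_gt0 // big_mkord in hu.
  have := Hall u; rewrite /X in hu; lra.
have HQ : Qe X (sgcd D) by apply: Qe_sgcd.
apply: Hnr; apply: (res_derive hb) => eta heta.
have [J HJ] := HQ _ heta; exists J => j hj.
have := HJ j hj; rewrite /X.
have -> : (sgcd D)%:R * (b%:R ^+ j * al + be) = b%:R ^+ j * ((sgcd D)%:R * al) + (sgcd D)%:R * be by ring.
done.
Qed.

End NR.

Set Implicit Arguments.
Unset Strict Implicit.

Section Assemble.
Variable R : realType.
Variable b : nat.
Variable D : {set 'I_b}.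
Variable k : nat -> nat.
Hypothesis hb : (1 < b)%N.
Hypothesis hD : (2 <= #|D|)%N.
Hypothesis hk_incr : forall n, (k n < k n.+1)%N.
Hypothesis hk_range : forall m, inC D m <-> exists n, k n = m.
Local Notation C := R[i].
Local Notation q := (#|D|%:R : R).

Lemma block_sum (V : nmodType) (phi : nat -> V) u p : (0 < p)%N ->
  \sum_(p * b ^ u <= m < p * b ^ u + b ^ u) (if `[< inC D m >] then phi m else 0) =
  if `[< Cb D p >] then \sum_(0 <= w < b ^ u) (if inW D u w then phi (p * b ^ u + w)%N else 0)
  else 0.
Proof.
move=> hp.
rewrite -{1}[(p * b ^ u)%N]add0n big_addn addKn.
case: asboolP => hCp.
  apply: eq_big_nat => w /andP [_ hw].
  have := Cb_block D hb hp hw; rewrite addnC.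
  case: asboolP => [/(inC_Cb D hb _) h1|h1] hiff.
    by have [_ ->] := (proj1 hiff h1); rewrite addnC.
  case hW: (inW D u w) => //; exfalso; apply: h1; apply/(inC_Cb D hb _); apply/hiff; split=> //.
rewrite big1_seq // => w; rewrite mem_index_iota => /andP [_ hw].
case: asboolP => // /(inC_Cb D hb _) h1; exfalso; apply: hCp.
have := Cb_block D hb hp hw; rewrite addnC => hiff; have [] := proj1 hiff h1 => //.
Qed.

Definition g (al be : R) (m : nat) : C := if `[< inC D m >] then f b al be m else 0.
Definition cc (m : nat) : C := if `[< inC D m >] then 1 else 0.

Lemma cc_ge0 m : 0 <= cc m. Proof. by rewrite /cc; case: ifP. Qed.

Lemma g_le1 al be m : `|g al be m| <= 1.
Proof. by rewrite /g; case: ifP => _; rewrite ?normr0 // norm_e. Qed.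

Lemma sum_term al be M N : (M <= N)%N ->
  \sum_(M <= i < N) term b k al be i = \sum_(k M <= m < k N) g al be m.
Proof. move=> h; exact: (reindex hk_incr hk_range (f b al be) h). Qed.

Lemma sum_cc M N : (M <= N)%N -> \sum_(k M <= m < k N) cc m = (N - M)%:R.
Proof.
move=> h; rewrite -(reindex hk_incr hk_range (fun _ => (1 : C)) h).
by rewrite sumr_const_nat.
Qed.

Lemma cc_block u p : (0 < p)%N ->
  \sum_(p * b ^ u <= m < p * b ^ u + b ^ u) cc m =
  if `[< Cb D p >] then (q ^+ u)%:C else 0.
Proof.
move=> hp; rewrite /cc block_sum //; case: ifP => // _.
by rewrite cnt_Psi // rmorphXn /= rmorph_nat.
Qed.

Lemma nonres_window (al be : R) :
  ~ resonant b ((sgcd D)%:R * al) ((sgcd D)%:R * be) ->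
  forall eps : R, 0 < eps -> exists K : R, forall M N, (M <= N)%N ->
  `|\sum_(M <= i < N) term b k al be i| <= (eps * (N - M)%:R + K)%:C.
Proof.
move=> Hnr eps he.
have [u hu] := nonres_prod hb hD Hnr he.
exists ((2 * b ^ u)%:R) => M N hMN.
rewrite sum_term // rmorphD rmorphM /= !rmorph_nat -sum_cc //.
have hbu : (0 < b ^ u)%N by rewrite expn_gt0 ltnW.
have hep : (0 : C) <= eps%:C by rewrite ler0c ltW.
have H := @block_bound C C (b ^ u) (g al be) cc 1 (eps%:C) hbu cc_ge0 (@g_le1 al be) hep.
rewrite -[X in _ <= _ + X]mulr1; apply: H; last exact: kmono_le.
move=> p hp; rewrite cc_block // /g block_sum //.
case: ifP => _; last by rewrite normr0 mulr0.
have -> : \sum_(0 <= w < b ^ u) (if inW D u w then f b al be (p * b ^ u + w) else 0) = Psi D be u p al by [].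
rewrite norm_Psi // -rmorphM /=.
have -> : \prod_(j < u) `|F D (b%:R ^+ j * al + be)| = (\prod_(j < u) nc (F D (b%:R ^+ j * al + be)))%:C.
  by rewrite rmorph_prod /=; apply: eq_bigr => j _; rewrite norm_nc.
by rewrite lecR.
Qed.

End Assemble.

Set Implicit Arguments.
Unset Strict Implicit.

Section Res.
Variable R : realType.
Variable b : nat.
Variable D : {set 'I_b}.
Variable k : nat -> nat.
Hypothesis hb : (1 < b)%N.
Hypothesis hD : (2 <= #|D|)%N.
Hypothesis hk_incr : forall n, (k n < k n.+1)%N.
Hypothesis hk_range : forall m, inC D m <-> exists n, k n = m.
Local Notation C := R[i].
Local Notation q := (#|D|%:R : R).

Lemma res_nat (A Bt : R) : resonant b A Bt -> exists (a r m1 m2 : int) (t : nat),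
  A = a%:~R / (b%:R - 1) + r%:~R / b%:R ^+ t + m1%:~R /\ Bt = - (a%:~R / (b%:R - 1)) + m2%:~R.
Proof.
case=> a [r [t [[m1 h1] [m2 h2]]]].
case: t h1 => n h1.
  by exists a, r, m1, m2, n.
exists a, (r * (b ^ n.+1)%N%:Z)%R, m1, m2, 0%N; split=> //.
rewrite h1 expr0 divr1 intrM /=; congr (_ + _ + _).
have -> : (b%:R : R) ^ Negz n = (b%:R ^+ n.+1)^-1 by [].
by rewrite invrK -natrX.
Qed.

Lemma geomR (u : nat) : ((\sum_(i < u) b ^ i)%N%:R : R) * (b%:R - 1) = b%:R ^+ u - 1.
Proof.
by rewrite subrX1 mulrC natr_sum; congr (_ * _); apply: eq_bigr => i _; rewrite natrX.
Qed.

Lemma res_E1 (s0 : nat) (al be : R) a r m1 m2 t :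
  s0%:R * al = a%:~R / (b%:R - 1) + r%:~R / b%:R ^+ t + m1%:~R ->
  s0%:R * be = - (a%:~R / (b%:R - 1)) + m2%:~R ->
  forall u, (t <= u)%N -> e (s0%:R * (b%:R ^+ u * al + be)) = 1.
Proof.
move=> h1 h2 u htu.
rewrite -(subnKC htu); set w := (u - t)%N.
have hb1 : b%:R - 1 != (0 : R).
  rewrite subr_eq0; apply/negP => /eqP h; move: hb; rewrite -(ltr_nat R) h ltxx //.
have hbt : b%:R ^+ t != (0 : R) by rewrite expf_neq0 // pnatr_eq0 -lt0n ltnW.
have -> : s0%:R * (b%:R ^+ (t + w) * al + be) =
  ((a * (\sum_(i < t + w) b ^ i)%N%:Z + r * (b ^ w)%N%:Z + (b ^ (t + w))%N%:Z * m1 + m2)%R)%:~R.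
  have cz : forall n : nat, ((n%:Z)%:~R : R) = n%:R by [].
  rewrite !intrD !intrM /= !cz !natrX.
  have hS := geomR (t + w).
  have -> : ((\sum_(i < t + w) b ^ i)%N%:R : R) = (b%:R ^+ (t + w) - 1) / (b%:R - 1).
    by rewrite -hS; field.
  rewrite mulrDr mulrCA h1 h2 exprD; field.
  by rewrite hbt hb1.
exact: e_int.
Qed.

Lemma res_unit (s0 : nat) (al be : R) t :
  (forall d, d \in D -> (s0 %| d)%N) ->
  (forall u, (t <= u)%N -> e (s0%:R * (b%:R ^+ u * al + be)) = 1) ->
  forall v p, inW D v p -> forall u, (t <= u)%N ->
  e (p%:R * (b%:R ^+ u * al) + (sdig b p)%:R * be) = 1.
Proof.
move=> hdvd hE; elim=> [|v IH] p /=.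
  move/eqP=> -> u _; rewrite /sdig big_ord1 div0n mod0n !mul0r addr0 e0 //.
case/andP=> /existsP [d0 /andP [hd0 /eqP ed]] hW u htu.
have hp := @dm_eq b p.
have hd : (p %% b < b)%N by apply: ltn_pmod; apply: ltnW.
rewrite hp sdigS // -ed.
have -> : ((d0 + b * (p %/ b))%N%:R * (b%:R ^+ u * al) + (d0 + sdig b (p %/ b))%N%:R * be) =
  (d0 : nat)%:R * (b%:R ^+ u * al + be) + ((p %/ b)%N%:R * (b%:R ^+ u.+1 * al) + (sdig b (p %/ b))%:R * be).
  rewrite !natrD natrM exprS; ring.
rewrite eD IH //; last by apply: leqW.
have [c hc] : exists c, (d0 : nat) = (c * s0)%N by apply/dvdnP; apply: hdvd.
by rewrite hc natrM -mulrA eMn hE // expr1n mulr1.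
Qed.


Lemma cnat (n : nat) (x : R) : ((n%:R * (1 + x))%:C : R[i]) = n%:R * (1 + x%:C).
Proof. by rewrite rmorphM rmorph_nat rmorphD rmorph1. Qed.

Lemma res_window (s0 : nat) (al be : R) :
  (forall d, d \in D -> (s0 %| d)%N) ->
  resonant b (s0%:R * al) (s0%:R * be) ->
  exists (Lam : C) (K : R), forall N,
    `|\sum_(0 <= i < N) term b k al be i - Lam * N%:R| <= K%:C.
Proof.
move=> hdvd hres.
have [a [r [m1 [m2 [t [h1 h2]]]]]] := res_nat hres.
have hE := res_E1 h1 h2.
set T := (b ^ t)%N.
have hT : (0 < T)%N by rewrite expn_gt0 ltnW.
set Sf := \sum_(0 <= w < T) (if inW D t w then f b al be w else 0).
have hq0 : (q ^+ t)%:C != 0 :> C.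
  apply/eqP => /(@complexI R _ 0) /eqP; rewrite expf_eq0 pnatr_eq0 => /andP [_ /eqP h]; lia.
set Lam := Sf / (q ^+ t)%:C.
exists Lam, ((2 * T)%:R * (1 + nc Lam)) => N.
have hh : forall m, `|g D al be m - Lam * cc R D m| <= 1 + `|Lam|.
  move=> m; apply: le_trans (ler_normB _ _) _; apply: lerD; first exact: g_le1.
  rewrite normrM -[X in _ <= X]mulr1 ler_wpM2l //.
  by rewrite /cc; case: ifP; rewrite ?normr1 ?normr0.
have hblock : forall p, (0 < p)%N ->
  `|\sum_(p * T <= m < p * T + T) (g D al be m - Lam * cc R D m)| <=
    0 * \sum_(p * T <= m < p * T + T) cc R D m.
  move=> p hp; rewrite mul0r sumrB -mulr_sumr cc_block // /g block_sum //.
  case: asboolP => hCp; last by rewrite mulr0 subr0 normr0.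
  have -> : \sum_(0 <= w < b ^ t) (if inW D t w then f b al be (p * b ^ t + w) else 0) = Sf.
    apply: eq_big_nat => w /andP [_ hw].
    case: ifP => // _.
    rewrite /f sdig_split // natrD natrD.
    have [v [_ hv]] := hCp.
    have := res_unit hdvd hE hv (leqnn t).
    rewrite /T natrM natrX => hu.
    rewrite -[RHS]mulr1 -hu -eD; congr e; ring.
  by rewrite /Lam divfK // subrr normr0.
have := block_bound hT (cc_ge0 R D) hh (lexx 0) hblock (kmono_le hk_incr (leq0n N)).
rewrite mul0r add0r -/T => H.
rewrite (sum_term hk_incr hk_range) // -[N in Lam * N%:R]subn0 -(sum_cc R hk_incr hk_range) // mulr_sumr -sumrB.
apply: le_trans H _.
by rewrite cnat norm_nc.
Qed.
End Res.

Set Implicit Arguments.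
Unset Strict Implicit.

Section Final.
Variable R : realType.
Local Notation C := R[i].

Lemma posC (eps : C) : 0 < eps -> exists2 e' : R, 0 < e' & eps = e'%:C.
Proof.
rewrite ltcE => /andP [/eqP hi hr]; exists (complex.Re eps) => //.
by rewrite [LHS]complexE hi /= mulr0 addr0.
Qed.

Lemma conv_of_bound (u : nat -> C) (Lam : C) (K : R) :
  (forall N, `|\sum_(0 <= i < N) u i - Lam * N%:R| <= K%:C) ->
  (fun N => (N%:R)^-1 * \sum_(i < N) u i) @ \oo --> (Lam : C^o).
Proof.
move=> HB; apply/(@cvgrPdist_lt _ (R[i]^o)) => eps /posC [e' he' ->].
have hK : 0 <= K.
  have := HB 0%N; rewrite big_geq // mulr0 subrr normr0 lecR; done.
have hpos : 0 <= K / e' by rewrite divr_ge0 // ltW.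
have hab := archi_boundP hpos.
exists (Num.Def.archi_bound (K / e')).+1 => // N /= hN.
have hN0 : (0 < N)%N by apply: leq_trans hN.
have hNR : (0 : R) < N%:R by rewrite ltr0n.
have hNC : (N%:R : C) != 0 by rewrite pnatr_eq0 -lt0n.
have -> : Lam - (N%:R)^-1 * \sum_(i < N) u i = - ((N%:R)^-1 * (\sum_(0 <= i < N) u i - Lam * N%:R)).
  rewrite big_mkord mulrBr mulrCA mulVf // mulr1; ring.
rewrite normrN normrM normfV normr_nat.
apply: le_lt_trans (ler_wpM2l _ (HB N)) _; first by rewrite invr_ge0 ler0n.
have -> : ((N%:R : C)^-1 * K%:C) = (K / N%:R)%:C.
  by rewrite mulrC -(rmorph_nat (real_complex R)) -fmorph_div.
rewrite ltcR ltr_pdivrMr // mulrC -ltr_pdivrMr //.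
apply: lt_le_trans hab _; rewrite ler_nat; exact: ltnW.
Qed.

Lemma conv0_of_bound (u : nat -> C) :
  (forall eps : R, 0 < eps -> exists K : R, forall N,
     `|\sum_(0 <= i < N) u i| <= (eps * N%:R + K)%:C) ->
  (fun N => (N%:R)^-1 * \sum_(i < N) u i) @ \oo --> (0 : C^o).
Proof.
move=> HB; apply/(@cvgrPdist_lt _ (R[i]^o)) => eps /posC [e' he' ->].
have he2 : 0 < e' / 2 by rewrite divr_gt0.
have [K HK] := HB _ he2.
have hK : 0 <= K.
  have := HK 0%N; rewrite big_geq // normr0 mulr0 add0r lecR; done.
have hpos : 0 <= K / (e' / 2) by rewrite divr_ge0 // ltW.
have hab := archi_boundP hpos.
exists (Num.Def.archi_bound (K / (e' / 2))).+1 => // N /= hN.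
have hN0 : (0 < N)%N by apply: leq_trans hN.
have hNR : (0 : R) < N%:R by rewrite ltr0n.
rewrite sub0r normrN normrM normfV normr_nat.
have -> : \sum_(i < N) u i = \sum_(0 <= i < N) u i by rewrite big_mkord.
apply: le_lt_trans (ler_wpM2l _ (HK N)) _; first by rewrite invr_ge0 ler0n.
have -> : ((N%:R : C)^-1 * (e' / 2 * N%:R + K)%:C) = ((e' / 2 * N%:R + K) / N%:R)%:C.
  by rewrite mulrC -(rmorph_nat (real_complex R)) -fmorph_div.
rewrite ltcR ltr_pdivrMr //.
have : K / (e' / 2) < N%:R.
  apply: lt_le_trans hab _; rewrite ler_nat; exact: ltnW.
rewrite ltr_pdivrMr // => h; lra.
Qed.

Lemma banach_of_bound (u : nat -> C) :
  (forall eps : R, 0 < eps -> exists K : R, forall M N, (M <= N)%N ->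
     `|\sum_(M <= i < N) u i| <= (eps * (N - M)%:R + K)%:C) ->
  forall eta : R, 0 < eta -> exists L : nat, forall M N : nat, (M < N)%N -> (L <= N - M)%N ->
    `|((N - M)%:R)^-1 * \sum_(M <= i < N) u i| < eta%:C.
Proof.
move=> HB eta heta.
have he2 : 0 < eta / 2 by rewrite divr_gt0.
have [K HK] := HB _ he2.
have hK : 0 <= K.
  have := HK 0%N 0%N (leqnn _); rewrite big_geq // normr0 subnn mulr0 add0r lecR; done.
have hpos : 0 <= K / (eta / 2) by rewrite divr_ge0 // ltW.
have hab := archi_boundP hpos.
exists (Num.Def.archi_bound (K / (eta / 2))).+1 => M N hMN hL.
set n := (N - M)%N in hL *.
have hN0 : (0 < n)%N by apply: leq_trans hL.
have hNR : (0 : R) < n%:R by rewrite ltr0n.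
rewrite normrM normfV normr_nat.
apply: le_lt_trans (ler_wpM2l _ (HK M N (ltnW hMN))) _; first by rewrite invr_ge0 ler0n.
have -> : ((n%:R : C)^-1 * (eta / 2 * n%:R + K)%:C) = ((eta / 2 * n%:R + K) / n%:R)%:C.
  by rewrite mulrC -(rmorph_nat (real_complex R)) -fmorph_div.
rewrite ltcR ltr_pdivrMr //.
have : K / (eta / 2) < n%:R.
  apply: lt_le_trans hab _; rewrite ler_nat; exact: ltnW.
rewrite ltr_pdivrMr // => h; lra.
Qed.

End Final.

Lemma sgcd_pos (b : nat) (D : {set 'I_b}) : (2 <= #|D|)%N -> (0 < sgcd D)%N.
Proof.
move/card_gt1P => [d1 [d2 [h1 h2 h12]]].
rewrite lt0n; apply/negP => /eqP h0.
have : (sgcd D %| (d1 - d2) + (d2 - d1))%N.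
  rewrite /sgcd; apply: (@biggcdn_inf _ d1 (fun d => d \in D)) => //; apply: (@biggcdn_inf _ d2 (fun d => d \in D)) => //.
rewrite h0 dvd0n => /eqP h.
move: h12; rewrite -(inj_eq val_inj) /=; lia.
Qed.

Lemma res_rational (R : realType) (b : nat) (s : nat) (al be : R) : (1 < b)%N -> (0 < s)%N ->
  resonant b (s%:R * al) (s%:R * be) -> rational al /\ rational be.
Proof.
move=> hb hs hres.
have [a [r [m1 [m2 [t [h1 h2]]]]]] := res_nat hres.
have hsR : (s%:R : R) != 0 by rewrite pnatr_eq0 -lt0n.
split.
  exists ((a%:~R / (b%:R - 1) + r%:~R / b%:R ^+ t + m1%:~R) / s%:R) => //.
  rewrite fmorph_div !rmorphD /= !fmorph_div rmorphB /= !ratr_int rmorphXn /= !ratr_nat rmorph1.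
  by rewrite -h1 mulrC mulKf.
exists ((- (a%:~R / (b%:R - 1)) + m2%:~R) / s%:R) => //.
rewrite fmorph_div !rmorphD /= rmorphN /= !fmorph_div rmorphB /= !ratr_int !ratr_nat rmorph1.
by rewrite -h2 mulrC mulKf.
Qed.


Unset Implicit Arguments.
Set Strict Implicit.

Theorem mainTheorem6 (R : realType) (b : nat) (D : {set 'I_b}) (k : nat -> nat)
  (hb : (3 <= b)%N) (hD : (2 <= #|D|)%N)
  (hk_incr : forall n, (k n < k n.+1)%N)
  (hk_range : forall m, inC D m <-> exists n, k n = m) :
  let s := sgcd D in
  [/\
   (* (1) *)
   (s = 1%N ->
     forall alpha beta : R,
       cvgn (avg b k alpha beta) /\
       (limn (avg b k alpha beta) != 0 -> resonant b alpha beta)),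
   (* (2) *)
   ((1 < s)%N -> (forall d, d \in D -> (s %| d)%N) ->
     forall alpha beta : R,
       cvgn (avg b k alpha beta) /\
       (limn (avg b k alpha beta) != 0 ->
          resonant b (s%:R * alpha) (s%:R * beta))),
   (* (3) *)
   ((1 < s)%N -> (exists2 d, d \in D & ~~ (s %| d)%N) ->
     forall alpha beta : R,
       ~ resonant b (s%:R * alpha) (s%:R * beta) ->
       avg b k alpha beta @ \oo --> (0 : (R[i])^o))
   &
   (* irrational case: uniform (Banach-type) averages vanish *)
   (forall alpha beta : R, irrational alpha \/ irrational beta ->
     forall eta : R, 0 < eta ->
       exists L : nat, forall M N : nat, (M < N)%N -> (L <= N - M)%N ->
         `| ((N - M)%:R)^-1 * \sum_(M <= i < N) term b k alpha beta i |
           < eta%:C)].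
Proof.
move=> s.
have hb1 : (1 < b)%N by lia.
have hs0 : (0 < s)%N := sgcd_pos hD.
have NRw : forall al be : R, ~ resonant b (s%:R * al) (s%:R * be) ->
    forall eps : R, 0 < eps -> exists K : R, forall M N, (M <= N)%N ->
    `|\sum_(M <= i < N) term b k al be i| <= (eps * (N - M)%:R + K)%:C.
  move=> al be Hnr eps he; exact: (nonres_window hb1 hD hk_incr hk_range Hnr he).
have NR0 : forall al be : R, ~ resonant b (s%:R * al) (s%:R * be) ->
    avg b k al be @ \oo --> (0 : (R[i])^o).
  move=> al be Hnr; apply: conv0_of_bound => eps he.
  have [K HK] := NRw al be Hnr eps he; exists K => N.
  by have := HK 0%N N (leq0n N); rewrite subn0.
have RES : forall (s0 : nat) (al be : R), (forall d, d \in D -> (s0 %| d)%N) ->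
    resonant b (s0%:R * al) (s0%:R * be) -> cvgn (avg b k al be).
  move=> s0 al be hdvd hres.
  have [Lam [K HK]] := res_window hb1 hD hk_incr hk_range hdvd hres.
  apply: (@cvgP (R[i]^o) _ Lam); exact: conv_of_bound HK.
have lim0 : forall al be : R, ~ resonant b (s%:R * al) (s%:R * be) ->
    limn (avg b k al be) = 0.
  move=> al be Hnr; exact: (cvg_lim (@norm_hausdorff _ (R[i]^o)) (NR0 al be Hnr)).
split.
- move=> hs1 al be.
  have eqv : resonant b al be <-> resonant b (s%:R * al) (s%:R * be) by rewrite hs1 !mulr1n !mul1r.
  case: (classic (resonant b al be)) => Hr.
    split; last by move=> _.
    apply: (RES 1%N); first by move=> d _; exact: dvd1n.
    by rewrite !mulr1n !mul1r.
  have Hnr : ~ resonant b (s%:R * al) (s%:R * be) by move/eqv.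
  split; first exact: (@cvgP (R[i]^o) _ 0 (NR0 al be Hnr)).
  by rewrite lim0 // eqxx.
- move=> hs hdvd al be.
  case: (classic (resonant b (s%:R * al) (s%:R * be))) => Hr.
    by split; [exact: (RES s) | move=> _].
  split; first exact: (@cvgP (R[i]^o) _ 0 (NR0 al be Hr)).
  by rewrite lim0 // eqxx.
- move=> _ _ al be Hnr; exact: NR0.
- move=> al be hirr eta heta.
  have Hnr : ~ resonant b (s%:R * al) (s%:R * be).
    move=> hres; have [ra rb] := res_rational hb1 hs0 hres.
    by case: hirr => hi; apply: hi.
  exact: (banach_of_bound (NRw al be Hnr)).
Qed.
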